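(* Under the hypotheses of the previous setting (nonzero $\mathsf k_1,\mathsf k_2,\mathsf k_3$, a Bethe solution with pairwise distinct roots $\lambda_l\ne\lambda_m$, $\mu_p\ne\mu_q$, $\mu_q\ne\lambda_m$ and $\{\mu_h\}\cap\{\xi_n\}=\emptyset$), let $t_1(\lambda)=t_1(\lambda|\{\lambda_j\},\{\mu_h\})$, $x_a=t_1(\xi_a)$, and let $t^{(m)}_n(\lambda)=t^{(m)}_n(\lambda|\{x_a\})$ be the associated fused polynomials. Then the null out-boundary conditions $t^{(2+n)}_{3+m}(\lambda)=0$ hold for all $\lambda\in\mathbb C$ and all integers $n,m\ge0$, and the inner-boundary condition $\mathsf k_2\mathsf k_3\,d(\lambda)\,t_3(\lambda)=\mathsf k_1\,t^{(2)}_2(\lambda+\eta)$ holds for all $\lambda\in\mathbb C$; equivalently $\mathsf k_2\mathsf k_3d(\lambda)t_3(\lambda)=\mathsf k_1\big(t_2(\lambda)t_2(\lambda+\eta)-t_3(\lambda)t_1(\lambda+\eta)\big)$.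
   Context: Fix a nonzero complex number $\eta$, an integer $\mathsf N\ge1$ and complex inhomogeneities $\xi_1,\dots,\xi_{\mathsf N}$ with $\xi_a-\xi_b\notin\eta\mathbb Z$ for $a\ne b$. This concerns the fundamental $gl_{1|2}$ model with diagonal twist $K=\operatorname{diag}(\mathsf k_1,\mathsf k_2,\mathsf k_3)$. Write $d(\lambda)=\prod_{n=1}^{\mathsf N}(\lambda-\xi_n)$, $a(\lambda)=d(\lambda+\eta)$, and $f^{(m)}_a(\lambda)=\prod_{b\ne a}\frac{\lambda-\xi_b}{\xi_a-\xi_b}\prod_{b=1}^{\mathsf N}\prod_{r=1}^{m-1}\frac{1}{\xi_a-\xi_b+r\eta}$. Let $T_{\infty,1}=\mathsf k_1-\mathsf k_2-\mathsf k_3$ and $T_{\infty,n}=\mathsf k_1^{n-2}(\mathsf k_1-\mathsf k_2)(\mathsf k_1-\mathsf k_3)$ for $n\ge2$. Interpolation polynomials in unknowns $\{x_a\}$: $t_1(\lambda|\{x_a\})=T_{\infty,1}d(\lambda)+\sum_af^{(1)}_a(\lambda)x_a$ and, for $n\ge1$, $t_{n+1}(\lambda|\{x_a\})=\prod_{r=1}^nd(\lambda+r\eta)\big[T_{\infty,n+1}d(\lambda)+\sum_af^{(n+1)}_a(\lambda)t_n(\xi_a+\eta|\{x_a\})x_a\big]$. Fused polynomials: $t^{(m)}_n(\lambda|\{x_a\})=\det_{1\le i,j\le m}t_{n+i-j}(\lambda-(i-1)\eta|\{x_a\})$ with $t_0\equiv1$, $t_k\equiv0$ for $k<0$. Bethe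 Ansatz: $Q_1(\lambda)=\prod_{l=1}^L(\lambda-\lambda_l)$, $Q_2(\lambda)=\prod_{m=1}^M(\lambda-\mu_m)$; Bethe equations: $\mathsf k_1Q_2(\lambda_j)a(\lambda_j)=\mathsf k_2d(\lambda_j)Q_2(\lambda_j+\eta)$ ($j\le L$) and $\mathsf k_2Q_2(\mu_j+\eta)Q_1(\mu_j-\eta)=-\mathsf k_3Q_2(\mu_j-\eta)Q_1(\mu_j)$ ($j\le M$). Define $\Lambda_1(\lambda)=\mathsf k_1a(\lambda)\frac{Q_1(\lambda-\eta)}{Q_1(\lambda)}$, $\Lambda_2(\lambda)=\mathsf k_2d(\lambda)\frac{Q_1(\lambda-\eta)Q_2(\lambda+\eta)}{Q_1(\lambda)Q_2(\lambda)}$, $\Lambda_3(\lambda)=\mathsf k_3d(\lambda)\frac{Q_2(\lambda-\eta)}{Q_2(\lambda)}$, and $t_1(\lambda|\{\lambda_j\},\{\mu_h\})=\Lambda_1(\lambda)-\Lambda_2(\lambda)-\Lambda_3(\lambda)$. *)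

(* Defs.v *)
(* The base field C is modelled by an arbitrary
   numClosedFieldType (algebraically closed, characteristic 0, e.g. C). *)
From HB Require Import structures.
From mathcomp Require Import all_boot all_order all_algebra.
Set Implicit Arguments. Unset Strict Implicit. Unset Printing Implicit Defensive.
Import Order.TTheory GRing.Theory Num.Theory.
Local Open Scope ring_scope.

Section Gl12.
Variable R : numClosedFieldType.
Variable N : nat.
Variable xi : 'I_N -> R.
Variable eta : R.
Variables k1 k2 k3 : R.

Definition dfun (l : R) : R := \prod_(n < N) (l - xi n).
Definition afun (l : R) : R := dfun (l + eta).

Definition ffun (m : nat) (a : 'I_N) (l : R) : R :=
  (\prod_(b < N | b != a) ((l - xi b) / (xi a - xi b))) *
  \prod_(b < N) \prod_(1 <= r < m) (xi a - xi b + r%:R * eta)^-1.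

(* T_{infty,n}; only used for n >= 1 *)
Definition Tinf (n : nat) : R :=
  match n with
  | 0 => 0
  | 1 => k1 - k2 - k3
  | n'.+2 => k1 ^+ n' * (k1 - k2) * (k1 - k3)
  end.

Fixpoint tpol (x : 'I_N -> R) (n : nat) (l : R) : R :=
  match n with
  | 0 => 1
  | n'.+1 =>
      (\prod_(1 <= r < n'.+1) dfun (l + r%:R * eta)) *
      (Tinf n'.+1 * dfun l +
       \sum_(a < N) ffun n'.+1 a l * tpol x n' (xi a + eta) * x a)
  end.

Definition tpolZ (x : 'I_N -> R) (k : int) (l : R) : R :=
  match k with
  | Posz n => tpol x n l
  | Negz _ => 0
  end.

(* fused polynomials t^(m)_n(l) = det_{1<=i,j<=m} t_{n+i-j}(l - (i-1) eta)
   (written with 0-based indices i, j < m) *)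
Definition tfused (x : 'I_N -> R) (m : nat) (n : nat) (l : R) : R :=
  \det (\matrix_(i < m, j < m)
          tpolZ x (n%:Z + i%:Z - j%:Z) (l - i%:R * eta)).

Definition Qpol (k : nat) (roots : 'I_k -> R) (l : R) : R :=
  \prod_(j < k) (l - roots j).

Definition t1Bethe (L M : nat) (lam : 'I_L -> R) (mu : 'I_M -> R) (l : R) : R :=
  let Q1 := Qpol lam in let Q2 := Qpol mu in
  k1 * afun l * Q1 (l - eta) / Q1 l
  - k2 * dfun l * Q1 (l - eta) * Q2 (l + eta) / (Q1 l * Q2 l)
  - k3 * dfun l * Q2 (l - eta) / Q2 l.

Definition bethe_eqs (L M : nat) (lam : 'I_L -> R) (mu : 'I_M -> R) : Prop :=
  let Q1 := Qpol lam in let Q2 := Qpol mu in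
  (forall j : 'I_L,
      k1 * Q2 (lam j) * afun (lam j) = k2 * dfun (lam j) * Q2 (lam j + eta)) /\
  (forall j : 'I_M,
      k2 * Q2 (mu j + eta) * Q1 (mu j - eta) = - (k3 * Q2 (mu j - eta) * Q1 (mu j))).

End Gl12.

(* Main.v *)
Require Import Defs.
From HB Require Import structures.
From mathcomp Require Import all_boot all_order all_algebra.
From mathcomp Require Import zify ring.
Set Implicit Arguments. Unset Strict Implicit. Unset Printing Implicit Defensive.
Import Order.TTheory GRing.Theory Num.Theory.
Local Open Scope ring_scope.

Section Approx.
Variable R : fieldType.
Implicit Types p q : {poly R}.

Definition approx p (c : R) (k : nat) := (size (p - c *: 'X^k)%R <= k)%N.

Lemma approx_size p c k : approx p c k -> (size p <= k.+1)%N.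
Proof.
rewrite /approx => h.
have -> : p = (p - c *: 'X^k) + c *: 'X^k by rewrite subrK.
apply: leq_trans (size_polyD _ _) _.
rewrite geq_max (leq_trans h) //.
by apply: leq_trans (size_scale_leq _ _) _; rewrite size_polyXn.
Qed.

Lemma approx_sizeE p c k : c != 0 -> approx p c k -> size p = k.+1.
Proof.
move=> c0; rewrite /approx => h.
have -> : p = c *: 'X^k + (p - c *: 'X^k) by rewrite addrC subrK.
by rewrite size_polyDl size_scale // size_polyXn.
Qed.

Lemma approxD p q c c' k : approx p c k -> approx q c' k -> approx (p + q) (c + c') k.
Proof.
rewrite /approx => h1 h2.
have -> : p + q - (c + c') *: 'X^k = (p - c *: 'X^k) + (q - c' *: 'X^k).
  by rewrite scalerDl; ring.
by apply: leq_trans (size_polyD _ _) _; rewrite geq_max h1 h2.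
Qed.

Lemma approxZ p c k a : approx p c k -> approx (a *: p) (a * c) k.
Proof.
rewrite /approx => h.
have -> : a *: p - (a * c) *: 'X^k = a *: (p - c *: 'X^k).
  by rewrite scalerBr scalerA.
exact: leq_trans (size_scale_leq _ _) h.
Qed.

Lemma approxN p c k : approx p c k -> approx (- p) (- c) k.
Proof.
move=> h; have := approxZ (-1) h; by rewrite scaleN1r mulN1r.
Qed.

Lemma approxB p q c c' k : approx p c k -> approx q c' k -> approx (p - q) (c - c') k.
Proof. by move=> h1 h2; apply: approxD h1 (approxN h2). Qed.

Lemma small_mul p q a b : (size p <= a)%N -> (size q <= b)%N -> (size (p * q)%R <= (a + b).-1)%N.
Proof.
move=> h1 h2; apply: leq_trans (size_polyMleq _ _) _; lia.
Qed.

Lemma approxM p q c c' k k' : approx p c k -> approx q c' k' ->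
  approx (p * q) (c * c') (k + k').
Proof.
rewrite /approx => h1 h2.
set e := p - c *: 'X^k; set e' := q - c' *: 'X^k'.
have {h1}h1 : (size e <= k)%N by []. have {h2}h2 : (size e' <= k')%N by [].
have -> : p * q - (c * c') *: 'X^(k + k') =
   (c *: 'X^k) * e' + e * (c' *: 'X^k') + e * e'.
  rewrite /e /e' exprD -!mul_polyC polyCM; ring.
apply: leq_trans (size_polyD _ _) _; rewrite geq_max.
apply/andP; split; last first.
  apply: leq_trans (small_mul h1 h2) _; lia.
apply: leq_trans (size_polyD _ _) _; rewrite geq_max.
apply/andP; split.
  have HH := size_scale_leq c ('X^k : {poly R}); rewrite size_polyXn in HH.
  apply: leq_trans (small_mul HH h2) _; lia.
have HH := size_scale_leq c' ('X^k' : {poly R}); rewrite size_polyXn in HH.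
apply: leq_trans (small_mul h1 HH) _; lia.
Qed.

Lemma approx_cancel p q c c' m k : c' != 0 ->
  approx (q * p) c (m + k) -> approx q c' m -> approx p (c / c') k.
Proof.
move=> c0 h hq.
have sq := approx_sizeE c0 hq.
rewrite /approx in h *.
set e := p - (c / c') *: 'X^k.
have he : (size (q * e)%R <= m + k)%N.
  have -> : q * e = (q * p - c *: 'X^(m + k)) - (c / c') *: ((q - c' *: 'X^m) * 'X^k).
    rewrite /e exprD -!mul_polyC.
    have {2}-> : c = c / c' * c' by rewrite mulfVK.
    rewrite polyCM; ring.
  apply: leq_trans (size_polyD _ _) _; rewrite size_polyN geq_max h /=.
  apply: leq_trans (size_scale_leq _ _) _.
  apply: leq_trans (size_polyMleq _ _) _; rewrite size_polyXn.
  move: hq; rewrite /approx; lia.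
have [->|e0] := eqVneq e 0; first by rewrite size_poly0.
have q0 : q != 0 by rewrite -size_poly_eq0 sq.
move: he; rewrite size_mul // sq addSn /= leq_add2l; exact.
Qed.

Lemma approx_X_addC (a : R) : approx ('X + a%:P) 1 1.
Proof.
by rewrite /approx scale1r expr1 addrC addKr size_polyC; case: (a != 0).
Qed.

Lemma approx_XaddC_exp (a : R) k : approx (('X + a%:P) ^+ k) 1 k.
Proof.
elim: k => [|k IH].
  by rewrite /approx expr0 scale1r subrr size_poly0.
rewrite exprS -[1]mul1r -add1n; apply: approxM => //; exact: approx_X_addC.
Qed.

Lemma approx_comp p c k (a : R) : approx p c k -> approx (p \Po ('X + a%:P)) c k.
Proof.
move=> h.
have -> : p \Po ('X + a%:P) = (p - c *: 'X^k) \Po ('X + a%:P) + c *: ('X + a%:P) ^+ k.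
  by rewrite comp_polyB comp_polyZ comp_Xn_poly subrK.
have h0 : approx ((p - c *: 'X^k) \Po ('X + a%:P)) 0 k.
  by rewrite /approx scale0r subr0 size_comp_poly2 ?size_XaddC.
by have := approxD h0 (approxZ c (approx_XaddC_exp a k)); rewrite add0r mulr1.
Qed.

Lemma approx_prod k (F : 'I_k -> R) :
  approx (\prod_(j < k) ('X + (F j)%:P)) 1 k.
Proof.
elim: k F => [|k IH] F.
  by rewrite big_ord0 /approx expr0 scale1r subrr size_poly0.
rewrite big_ord_recr /=.
by have := approxM (IH (fun j => F (widen_ord (leqnSn k) j))) (approx_X_addC (F ord_max));
  rewrite mulr1 addn1.
Qed.

End Approx.

Section Interp.
Variable R : fieldType.
Variable N : nat.
Variable xi : 'I_N -> R.
Hypothesis xi_inj : injective xi.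
Hypothesis N0 : (0 < N)%N.

Definition dP : {poly R} := \prod_(n < N) ('X + (- xi n)%:P).
Definition Lag (a : 'I_N) : {poly R} :=
  \prod_(b < N | b != a) ((xi a - xi b)^-1 *: ('X + (- xi b)%:P)).

Lemma dPE l : dP.[l] = \prod_(n < N) (l - xi n).
Proof. by rewrite /dP horner_prod; apply: eq_bigr => n _; rewrite hornerD hornerX hornerC. Qed.

Lemma LagE a l : (Lag a).[l] = \prod_(b < N | b != a) ((l - xi b) / (xi a - xi b)).
Proof.
rewrite /Lag horner_prod; apply: eq_bigr => n _.
by rewrite hornerZ hornerD hornerX hornerC mulrC.
Qed.

Lemma xi_neq a b : a != b -> xi a - xi b != 0.
Proof. by move=> ab; rewrite subr_eq0; apply: contra ab => /eqP/xi_inj ->. Qed.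

Lemma Lag_xi a c : (Lag a).[xi c] = (a == c)%:R.
Proof.
rewrite LagE; have [<-|ac] := eqVneq a c.
  by rewrite big1 // => b ba; rewrite divff // xi_neq // eq_sym.
rewrite (bigD1 c) /=; last by rewrite eq_sym.
by rewrite subrr mul0r mul0r.
Qed.

Lemma dP_xi c : dP.[xi c] = 0.
Proof. by rewrite dPE (bigD1 c) //= subrr mul0r. Qed.

Lemma approx_dP : approx dP 1 N.
Proof. exact: approx_prod. Qed.

Lemma size_Lag a : (size (Lag a) <= N)%N.
Proof.
rewrite /Lag scaler_prod.
apply: leq_trans (size_scale_leq _ _) _.
move: N0 approx_dP; rewrite /dP (bigD1 a) //=.
case: N xi a => // n xi' a _ h.
have h1 : approx ('X + (- xi' a)%:P) 1 1 by exact: approx_X_addC.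
rewrite -[X in approx _ _ X]add1n in h; have := approx_cancel (oner_neq0 _) h h1; rewrite divr1 => /approx_size.
done.
Qed.

Lemma interp P T : approx P T N -> forall l,
  P.[l] = T * \prod_(n < N) (l - xi n) +
          \sum_(a < N) (\prod_(b < N | b != a) ((l - xi b) / (xi a - xi b))) * P.[xi a].
Proof.
move=> hP.
pose Z := P - T *: dP - \sum_(a < N) P.[xi a] *: Lag a.
have sZ : (size Z <= N)%N.
  apply: leq_trans (size_polyD _ _) _; rewrite geq_max; apply/andP; split.
    have := approxB hP (approxZ T approx_dP); rewrite mulr1 subrr /approx.
    by rewrite scale0r subr0.
  rewrite size_polyN; apply: leq_trans (size_sum _ _ _) _.
  apply/bigmax_leqP => a _; apply: leq_trans (size_scale_leq _ _) _.
  exact: size_Lag.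
have rZ c : Z.[xi c] = 0.
  rewrite /Z !hornerE horner_sum dP_xi mulr0 subr0.
  rewrite (bigD1 c) //= big1 => [|a ac]; last by rewrite hornerZ Lag_xi (negbTE ac) mulr0.
  by rewrite hornerZ Lag_xi eqxx mulr1 addr0 subrr.
have Z0 : Z = 0.
  apply/eqP; apply: contraT => nz.
  have H1 : all (root Z) (map xi (enum 'I_N)).
    by apply/allP => y /mapP [c _ ->]; rewrite /root rZ.
  have H2 : uniq (map xi (enum 'I_N)) by rewrite map_inj_uniq // enum_uniq.
  have := @max_poly_roots _ Z _ nz H1 H2.
  by rewrite size_map size_enum_ord ltnNge sZ.
move=> l; have := congr1 (fun p => p.[l]) Z0.
rewrite /Z !hornerE horner_sum dPE => /eqP; rewrite subr_eq0 subr_eq => /eqP ->.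
rewrite addrC; congr (_ + _); apply: eq_bigr => a _.
by rewrite hornerZ LagE mulrC.
Qed.
End Interp.

Section Main.
Variable R : numClosedFieldType.
Variable N : nat.
Variable xi : 'I_N -> R.
Variable eta : R.
Variables k1 k2 k3 : R.
Variables L M : nat.
Variable lam : 'I_L -> R.
Variable mu : 'I_M -> R.
Hypothesis N0 : (0 < N)%N.
Hypothesis eta0 : eta != 0.
Hypothesis xiH : forall (a b : 'I_N) (r : int), a != b -> xi a - xi b != r%:~R * eta.
Hypothesis k10 : k1 != 0.
Hypothesis k20 : k2 != 0.
Hypothesis k30 : k3 != 0.
Hypothesis eq1 : forall j : 'I_L,
  k1 * Qpol mu (lam j) * afun xi eta (lam j) = k2 * dfun xi (lam j) * Qpol mu (lam j + eta).
Hypothesis eq2 : forall j : 'I_M,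
  k2 * Qpol mu (mu j + eta) * Qpol lam (mu j - eta) = - (k3 * Qpol mu (mu j - eta) * Qpol lam (mu j)).
Hypothesis lam_inj : injective lam.
Hypothesis mu_inj : injective mu.
Hypothesis mulam : forall (q : 'I_M) (m : 'I_L), mu q != lam m.
Hypothesis muxi : forall (h : 'I_M) (n : 'I_N), mu h != xi n.

Local Notation d := (dfun xi).
Local Notation Q1 := (Qpol lam).
Local Notation Q2 := (Qpol mu).

Definition lp k (c : 'I_k -> R) (s : R) : {poly R} := \prod_(j < k) ('X + (s - c j)%:P).

Lemma lpE k (c : 'I_k -> R) s l : (lp c s).[l] = Qpol c (l + s).
Proof.
rewrite /lp /Qpol horner_prod; apply: eq_bigr => j _.
by rewrite hornerD hornerX hornerC addrA.
Qed.

Lemma lpdE s l : (lp xi s).[l] = d (l + s).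
Proof. exact: lpE. Qed.

Lemma approx_lp k (c : 'I_k -> R) s : approx (lp c s) 1 k.
Proof. exact: approx_prod. Qed.

Lemma lp_dvd k (c : 'I_k -> R) p : injective c -> (forall j, p.[c j] = 0) -> lp c 0 %| p.
Proof.
move=> ci h.
have -> : lp c 0 = \prod_(z <- map c (index_enum 'I_k)) ('X - z%:P).
  by rewrite /lp big_map; apply: eq_bigr => j _; rewrite sub0r polyCN.
apply: uniq_roots_dvdp.
  by apply/allP => y /mapP [j _ ->]; rewrite /root h.
by rewrite uniq_rootsE map_inj_uniq // index_enum_uniq.
Qed.

Lemma Qpol_neq0 k (c : 'I_k -> R) l : (forall j, l != c j) -> Qpol c l != 0.
Proof. by move=> h; apply/prodf_neq0 => j _; rewrite subr_eq0 h. Qed.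

Lemma Qpol_root k (c : 'I_k -> R) j : Qpol c (c j) = 0.
Proof. by rewrite /Qpol (bigD1 j) //= subrr mul0r. Qed.

Lemma d_xi a : d (xi a) = 0.
Proof. exact: Qpol_root. Qed.

Lemma d_shift a (r : nat) : (0 < r)%N -> d (xi a + r%:R * eta) != 0.
Proof.
move=> r0; apply/prodf_neq0 => b _.
have [<-|ab] := eqVneq a b.
  by rewrite addrC addKr mulf_neq0 // pnatr_eq0 -lt0n.
have := xiH (- (r%:Z)) ab; rewrite intrN mulNr.
apply: contra => /eqP h; apply/eqP.
by rewrite -(subr0 (xi a - xi b)) -h /=; ring.
Qed.

Lemma Q2_xi a : Q2 (xi a) != 0.
Proof. by apply: Qpol_neq0 => j; rewrite eq_sym muxi. Qed.

Lemma Q2_lam j : Q2 (lam j) != 0.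
Proof. by apply: Qpol_neq0 => q; rewrite eq_sym mulam. Qed.

Lemma Q1_mu q : Q1 (mu q) != 0.
Proof. by apply: Qpol_neq0 => j; rewrite mulam. Qed.

Lemma a_xi a : afun xi eta (xi a) != 0.
Proof. by have := d_shift a (r:=1) isT; rewrite mul1r. Qed.

Lemma Q1_xi a : Q1 (xi a) != 0.
Proof.
apply: Qpol_neq0 => j; apply/eqP => e.
have := eq1 j; rewrite -e d_xi mulr0 mul0r => /eqP.
by rewrite !mulf_eq0 (negbTE k10) (negbTE (Q2_xi a)) (negbTE (a_xi a)).
Qed.

Lemma Q2_lam_eta j : Q2 (lam j + eta) != 0.
Proof.
apply: Qpol_neq0 => q; apply/eqP => e.
have := eq1 j; rewrite e Qpol_root mulr0 => /eqP.
rewrite !mulf_eq0 (negbTE k10) (negbTE (Q2_lam j)) /= /afun e => /prodf_eq0 [n _].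
by rewrite subr_eq0 (negbTE (muxi q n)).
Qed.

Definition Q1P := lp lam 0.
Definition Q2P := lp mu 0.
Definition SP := k1 *: (lp xi eta * Q2P) - k2 *: (lp xi 0 * lp mu eta).

Lemma SPE l : SP.[l] = k1 * d (l + eta) * Q2 l - k2 * d l * Q2 (l + eta).
Proof. by rewrite /SP /Q2P hornerD hornerN !hornerZ !hornerM !lpdE !lpE !addr0 !mulrA. Qed.

Lemma dvd_S : Q1P %| SP.
Proof.
apply: lp_dvd => // j; rewrite SPE.
have := eq1 j; rewrite /afun => e; by rewrite mulrAC e subrr.
Qed.

Definition UP := SP %/ Q1P.
Lemma SU : SP = UP * Q1P.
Proof. by apply/eqP; rewrite -dvdp_eq dvd_S. Qed.

Lemma UPE l : UP.[l] * Q1 l = SP.[l].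
Proof. by rewrite SU hornerM /Q1P lpE addr0. Qed.

Definition numV := lp lam (- eta) * UP - k3 *: (lp xi 0 * lp mu (- eta)).

Lemma numVE l : numV.[l] = Q1 (l - eta) * UP.[l] - k3 * (d l * Q2 (l - eta)).
Proof. by rewrite /numV hornerD hornerN !hornerZ !hornerM !lpdE !lpE !addr0. Qed.

Lemma dvd_V : Q2P %| numV.
Proof.
apply: lp_dvd => // q.
apply/eqP; rewrite -(mulIr_eq0 _ (mulIf (Q1_mu q))) numVE.
have hU := UPE (mu q); rewrite SPE Qpol_root mulr0 sub0r in hU.
have -> : (Q1 (mu q - eta) * UP.[mu q] - k3 * (d (mu q) * Q2 (mu q - eta))) * Q1 (mu q)
   = Q1 (mu q - eta) * (UP.[mu q] * Q1 (mu q)) - k3 * d (mu q) * Q2 (mu q - eta) * Q1 (mu q)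
  by ring.
rewrite hU.
have -> : Q1 (mu q - eta) * - (k2 * d (mu q) * Q2 (mu q + eta)) -
    k3 * d (mu q) * Q2 (mu q - eta) * Q1 (mu q) =
  - d (mu q) * (k2 * Q2 (mu q + eta) * Q1 (mu q - eta) + k3 * Q2 (mu q - eta) * Q1 (mu q))
  by ring.
by rewrite eq2 addNr mulr0.
Qed.

Definition VP := numV %/ Q2P.
Lemma numVV : numV = VP * Q2P.
Proof. by apply/eqP; rewrite -dvdp_eq dvd_V. Qed.

Lemma VPE l : VP.[l] * Q2 l = numV.[l].
Proof. by rewrite numVV hornerM /Q2P lpE addr0. Qed.

Definition numW := k1 *: (VP \Po ('X + eta%:P)) + (k2 * k3) *: lp xi 0.

Lemma numWE l : numW.[l] = k1 * VP.[l + eta] + k2 * k3 * d l.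
Proof. by rewrite /numW hornerD !hornerZ horner_comp hornerD hornerX hornerC lpdE addr0. Qed.

Lemma dvd_W : Q1P %| numW.
Proof.
apply: lp_dvd => // j.
apply/eqP; rewrite -(mulIr_eq0 _ (mulIf (Q2_lam_eta j))) numWE.
have hV := VPE (lam j + eta); rewrite numVE !addrK Qpol_root mul0r sub0r in hV.
apply/eqP; have -> : (k1 * VP.[lam j + eta] + k2 * k3 * d (lam j)) * Q2 (lam j + eta) =
   k1 * (VP.[lam j + eta] * Q2 (lam j + eta)) + k3 * (k2 * d (lam j) * Q2 (lam j + eta)) by ring.
rewrite hV -eq1 /afun; ring.
Qed.

Definition WP := numW %/ Q1P.
Lemma numWW : numW = WP * Q1P.
Proof. by apply/eqP; rewrite -dvdp_eq dvd_W. Qed.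

Lemma WPE l : WP.[l] * Q1 l = k1 * VP.[l + eta] + k2 * k3 * d l.
Proof. by rewrite -numWE numWW hornerM /Q1P lpE addr0. Qed.

Lemma K a : VP.[xi a] * Q1 (xi a) = k1 * afun xi eta (xi a) * Q1 (xi a - eta).
Proof.
apply: (mulIf (Q2_xi a)).
have -> : VP.[xi a] * Q1 (xi a) * Q2 (xi a) = (VP.[xi a] * Q2 (xi a)) * Q1 (xi a) by ring.
rewrite VPE numVE d_xi mul0r mulr0 subr0.
have -> : Q1 (xi a - eta) * UP.[xi a] * Q1 (xi a) = Q1 (xi a - eta) * (UP.[xi a] * Q1 (xi a)) by ring.
rewrite UPE SPE d_xi mulr0 mul0r subr0 /afun; ring.
Qed.

Lemma x_V a : t1Bethe xi eta k1 k2 k3 lam mu (xi a) = VP.[xi a].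
Proof.
rewrite /t1Bethe d_xi !mulr0 !mul0r !subr0.
apply: (mulIf (Q1_xi a)); rewrite K mulfVK //.
exact: Q1_xi.
Qed.

Lemma approx_eqc (p : {poly R}) (c c' : R) k : approx p c k -> c = c' -> approx p c' k.
Proof. by move=> h <-. Qed.
Lemma approx_eqk (p : {poly R}) (c : R) k k' : approx p c k -> k = k' -> approx p c k'.
Proof. by move=> h <-. Qed.

Lemma approx_S : approx SP (k1 - k2) (N + M).
Proof.
apply: (approx_eqc (approxB (approxZ k1 (approxM (approx_lp xi eta) (approx_lp mu 0)))
   (approxZ k2 (approxM (approx_lp xi 0) (approx_lp mu eta))))).
by rewrite !mulr1.
Qed.

Lemma approx_V : approx VP (Tinf k1 k2 k3 1) N.
Proof.
have h1 : approx (Q1P * Q2P) 1 (L + M) by rewrite -[1]mulr1; apply: approxM; exact: approx_lp.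
have h2 : approx ((Q1P * Q2P) * VP) (k1 - k2 - k3) ((L + M) + N).
  have -> : Q1P * Q2P * VP = lp lam (- eta) * SP - k3 *: (Q1P * (lp xi 0 * lp mu (- eta))).
    rewrite -mulrA [Q2P * VP]mulrC -numVV /numV SU.
    rewrite mulrBr -scalerAr; congr (_ - _); ring.
  have := approxB (approxM (approx_lp lam (- eta)) approx_S)
     (approxZ k3 (approxM (approx_lp lam 0) (approxM (approx_lp xi 0) (approx_lp mu (- eta))))).
  rewrite !mulr1 !mul1r => h; apply: approx_eqk h _; lia.
by have := approx_cancel (oner_neq0 _) h2 h1; rewrite divr1.
Qed.


Lemma xi_inj : injective xi.
Proof.
move=> a b e; apply/eqP; apply: contraT => ab.
by have := xiH 0 ab; rewrite e subrr mul0r eqxx.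
Qed.

Definition Gp (n : nat) : {poly R} :=
  match n with
  | 0 => 1
  | 1 => VP
  | n'.+2 => k1 ^+ n' *: (lp lam (- eta) * (WP \Po ('X + (n'%:R * eta)%:P)))
  end.

Lemma GpE2 n l : (Gp n.+2).[l] = k1 ^+ n * (Q1 (l - eta) * WP.[l + n%:R * eta]).
Proof. by rewrite /= hornerZ hornerM lpE horner_comp hornerD hornerX hornerC. Qed.

Lemma approx_G n : approx (Gp n.+1) (Tinf k1 k2 k3 n.+1) N.
Proof.
case: n => [|n]; first exact: approx_V.
set s := n%:R * eta.
have hq : approx (Q1P \Po ('X + s%:P)) 1 L := approx_comp s (approx_lp lam 0).
have hW : approx (numW \Po ('X + s%:P)) (k1 * Tinf k1 k2 k3 1 + k2 * k3 * 1) N.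
  apply: approx_comp; apply: approxD; apply: approxZ.
    exact: approx_comp approx_V.
  exact: approx_lp.
have h : approx ((Q1P \Po ('X + s%:P)) * Gp n.+2)
   (k1 ^+ n * (1 * (k1 * Tinf k1 k2 k3 1 + k2 * k3 * 1))) (L + N).
  have -> : (Q1P \Po ('X + s%:P)) * Gp n.+2 =
      k1 ^+ n *: (lp lam (- eta) * (numW \Po ('X + s%:P))).
    by rewrite /= numWW comp_polyM -scalerAr; congr (_ *: _); ring.
  apply: approxZ; exact: approxM (approx_lp lam (- eta)) hW.
have := approx_cancel (oner_neq0 _) h hq; rewrite divr1 => h'.
by apply: approx_eqc h' _; rewrite /Tinf; ring.
Qed.

Definition cf n l := \prod_(1 <= r < n) d (l + r%:R * eta) * (Gp n).[l].

Lemma cst_E a m :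
  \prod_(b < N) \prod_(1 <= r < m) (xi a - xi b + r%:R * eta)^-1 =
  (\prod_(1 <= r < m) d (xi a + r%:R * eta))^-1.
Proof.
rewrite exchange_big /= -prodfV; apply: eq_bigr => r _.
rewrite prodfV; congr (_^-1); apply: eq_bigr => b _; ring.
Qed.

Lemma Dn_neq0 a n : \prod_(1 <= r < n) d (xi a + r%:R * eta) != 0.
Proof.
rewrite prodf_seq_neq0; apply/allP => r; rewrite mem_index_iota => /andP [h _].
exact: d_shift.
Qed.

Local Notation xx := (fun a : 'I_N => t1Bethe xi eta k1 k2 k3 lam mu (xi a)).

Lemma key a n (IH : forall l, tpol xi eta k1 k2 k3 xx n l = cf n l) :
  tpol xi eta k1 k2 k3 xx n (xi a + eta) * xx a =
  \prod_(1 <= r < n.+1) d (xi a + r%:R * eta) * (Gp n.+1).[xi a].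
Proof.
rewrite IH x_V /cf.
case: n IH => [|[|n]] IH.
- by rewrite !big_geq //= hornerC !mul1r.
- rewrite big_geq // big_nat1 mul1r GpE2 expr0 mul1r mul0r addr0 mul1r /=.
  apply: (mulIf (Q1_xi a)).
  have e2 := WPE (xi a); rewrite d_xi mulr0 addr0 in e2.
  have -> : VP.[xi a + eta] * VP.[xi a] * Q1 (xi a) = VP.[xi a + eta] * (VP.[xi a] * Q1 (xi a))
    by ring.
  rewrite K.
  have -> : d (xi a + eta) * (Q1 (xi a - eta) * WP.[xi a]) * Q1 (xi a) =
     d (xi a + eta) * Q1 (xi a - eta) * (WP.[xi a] * Q1 (xi a)) by ring.
  rewrite e2 /afun; ring.
- rewrite !GpE2 addrK [in RHS]big_nat_recl // mul1r.
  have -> : \prod_(1 <= i < n.+2) d (xi a + i.+1%:R * eta) =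
            \prod_(1 <= r < n.+2) d (xi a + eta + r%:R * eta).
    by apply: eq_bigr => r _; congr (d _); ring.
  have -> : xi a + n.+1%:R * eta = xi a + eta + n%:R * eta by ring.
  set P := \prod_(1 <= r < n.+2) d (xi a + eta + r%:R * eta).
  set W' := WP.[xi a + eta + n%:R * eta].
  have -> : P * (k1 ^+ n * (Q1 (xi a) * W')) * VP.[xi a] =
      P * k1 ^+ n * W' * (VP.[xi a] * Q1 (xi a)) by ring.
  rewrite K /afun exprS; ring.
Qed.

Lemma tpol_cf n l : tpol xi eta k1 k2 k3 xx n l = cf n l.
Proof.
elim: n l => [|n IH] l.
  by rewrite /cf big_geq //= hornerC mul1r.
rewrite /cf /=; congr (_ * _).
rewrite (interp xi_inj N0 (approx_G n) l); congr (_ + _).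
apply: eq_bigr => a _.
rewrite /ffun -!mulrA; congr (_ * _).
rewrite cst_E key // mulKf //; exact: Dn_neq0.
Qed.

Lemma det2 (A : 'M[R]_2) : \det A = A 0 0 * A 1 1 - A 0 1 * A 1 0.
Proof.
rewrite (expand_det_row _ 0) !big_ord_recl big_ord0 addr0 /cofactor !det_mx11 /=.
rewrite !mxE /= expr0 expr1 mul1r mulN1r mulrN.
by congr (A _ _ * A _ _ - A _ _ * A _ _); apply: val_inj.
Qed.

Lemma det_prop n (A : 'M[R]_n) i1 i2 (u v : R) (sj : 'I_n -> R) :
  i1 != i2 -> (forall j, A i1 j = u * sj j) -> (forall j, A i2 j = v * sj j) -> \det A = 0.
Proof.
move=> i12 h1 h2.
have [u0|u0] := eqVneq u 0.
  rewrite (expand_det_row _ i1) big1 // => j _; by rewrite h1 u0 !mul0r.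
pose B := \matrix_(i, j) if i == i2 then A i1 j else A i j.
have hB : \det B = 0.
  apply: (determinant_alternate i12) => j; rewrite !mxE eqxx (negbTE i12) //.
have := @determinant_multilinear _ _ A B B i2 (v / u) 0.
rewrite hB mulr0 mul0r addr0; apply.
- apply/rowP => j; rewrite !mxE eqxx h2 h1 mul0r addr0.
  by rewrite mulrA mulfVK.
- apply/matrixP => i j; rewrite !mxE eq_sym (negbTE (neq_lift _ _)) //.
- apply/matrixP => i j; rewrite !mxE eq_sym (negbTE (neq_lift _ _)) //.
Qed.

Definition sfun k' (m : R) := \prod_(1 <= r < k'.+2) d (m + r%:R * eta) * k1 ^+ k' * WP.[m + k'%:R * eta].

Lemma cf_row1 k' m : cf k'.+2 m = Q1 (m - eta) * sfun k' m.
Proof. rewrite /cf GpE2 /sfun; ring. Qed.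

Lemma cf_row2 k' m : cf k'.+3 (m - eta) = (k1 * d m * Q1 (m - eta - eta)) * sfun k' m.
Proof.
rewrite /cf GpE2 /sfun big_nat_recl // mul1r subrK.
have -> : \prod_(1 <= i < k'.+2) d (m - eta + i.+1%:R * eta) =
          \prod_(1 <= r < k'.+2) d (m + r%:R * eta).
  by apply: eq_bigr => r _; congr (d _); ring.
have -> : m - eta + k'.+1%:R * eta = m + k'%:R * eta by ring.
rewrite exprS; ring.
Qed.

Lemma part1 n m l : tfused xi eta k1 k2 k3 xx (2 + n) (3 + m) l = 0.
Proof.
rewrite /tfused.
have hn1 : (n < 2 + n)%N by lia.
have hn2 : (n.+1 < 2 + n)%N by lia.
pose mm := l - n%:R * eta.
apply: (@det_prop _ _ (Ordinal hn1) (Ordinal hn2) (Q1 (mm - eta))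
   (k1 * d mm * Q1 (mm - eta - eta)) (fun j => sfun (m + (n.+1 - j)) mm)).
- by apply/eqP => -[] /n_Sn.
- move=> j; rewrite mxE /=.
  have -> : ((3 + m)%:Z + n%:Z - j%:Z)%R = Posz (m + (n.+1 - j)).+2.
    have := ltn_ord j; lia.
  by rewrite /tpolZ tpol_cf cf_row1.
- move=> j; rewrite mxE /=.
  have -> : ((3 + m)%:Z + n.+1%:Z - j%:Z)%R = Posz (m + (n.+1 - j)).+3.
    have := ltn_ord j; lia.
  have -> : l - n.+1%:R * eta = mm - eta by rewrite /mm; ring.
  by rewrite /tpolZ tpol_cf cf_row2.
Qed.

Lemma tf22 l : tfused xi eta k1 k2 k3 xx 2 2 (l + eta) =
  tpol xi eta k1 k2 k3 xx 2 (l + eta) * tpol xi eta k1 k2 k3 xx 2 l -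
  tpol xi eta k1 k2 k3 xx 1 (l + eta) * tpol xi eta k1 k2 k3 xx 3 l.
Proof.
have h0 : nat_of_ord (0 : 'I_2) = 0%N by [].
have h1 : nat_of_ord (1 : 'I_2) = 1%N by [].
rewrite /tfused det2 !mxE h0 h1.
have -> : (2%Z + 0%Z - 0%Z)%R = 2%:Z by [].
have -> : (2%Z + 1%Z - 1%Z)%R = 2%:Z by [].
have -> : (2%Z + 0%Z - 1%Z)%R = 1%:Z by [].
have -> : (2%Z + 1%Z - 0%Z)%R = 3%:Z by [].
have -> : l + eta - (0%N)%:R * eta = l + eta by rewrite mul0r subr0.
have -> : l + eta - (1%N)%:R * eta = l by rewrite mul1r addrK.
by rewrite /tpolZ mulrC.
Qed.

Lemma cf1 l : cf 1 l = VP.[l].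
Proof. by rewrite /cf big_geq // mul1r. Qed.

Lemma cf2 l : cf 2 l = d (l + eta) * Q1 (l - eta) * WP.[l].
Proof. rewrite /cf GpE2 big_nat1 expr0 mul0r addr0 mul1r mul1r; ring. Qed.

Lemma cf3 l : cf 3 l = k1 * d (l + eta) * d (l + eta + eta) * Q1 (l - eta) * WP.[l + eta].
Proof.
rewrite /cf GpE2 big_ltn // big_nat1 mul1r expr1.
have -> : l + 2%:R * eta = l + eta + eta by ring.
ring.
Qed.

Lemma part3 l : k2 * k3 * d l * tpol xi eta k1 k2 k3 xx 3 l =
  k1 * (tpol xi eta k1 k2 k3 xx 2 l * tpol xi eta k1 k2 k3 xx 2 (l + eta) -
        tpol xi eta k1 k2 k3 xx 3 l * tpol xi eta k1 k2 k3 xx 1 (l + eta)).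
Proof.
rewrite !tpol_cf cf1 !cf2 cf3 addrK.
have hd : k2 * k3 * d l = WP.[l] * Q1 l - k1 * VP.[l + eta] by rewrite WPE; ring.
rewrite hd; ring.
Qed.

Lemma main_sec :
  (forall (n m : nat) (l : R), tfused xi eta k1 k2 k3 xx (2 + n) (3 + m) l = 0) /\
  (forall l : R, k2 * k3 * dfun xi l * tpol xi eta k1 k2 k3 xx 3 l
      = k1 * tfused xi eta k1 k2 k3 xx 2 2 (l + eta)) /\
  (forall l : R, k2 * k3 * dfun xi l * tpol xi eta k1 k2 k3 xx 3 l
      = k1 * (tpol xi eta k1 k2 k3 xx 2 l * tpol xi eta k1 k2 k3 xx 2 (l + eta)
              - tpol xi eta k1 k2 k3 xx 3 l * tpol xi eta k1 k2 k3 xx 1 (l + eta))).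
Proof.
split; first exact: part1.
split => l; rewrite part3 //.
by rewrite tf22 [tpol _ _ _ _ _ _ 2 (l + eta) * _]mulrC [tpol _ _ _ _ _ _ 1 (l + eta) * _]mulrC.
Qed.

End Main.

Theorem lemmaA2 (R : numClosedFieldType) (N : nat) (xi : 'I_N -> R) (eta : R)
    (k1 k2 k3 : R) (L M : nat) (lam : 'I_L -> R) (mu : 'I_M -> R) :
  (0 < N)%N ->
  eta != 0 ->
  (forall (a b : 'I_N) (r : int), a != b -> xi a - xi b != r%:~R * eta) ->
  k1 != 0 -> k2 != 0 -> k3 != 0 ->
  bethe_eqs xi eta k1 k2 k3 lam mu ->
  injective lam -> injective mu ->
  (forall (q : 'I_M) (m : 'I_L), mu q != lam m) ->
  (forall (h : 'I_M) (n : 'I_N), mu h != xi n) ->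
  let x := fun a : 'I_N => t1Bethe xi eta k1 k2 k3 lam mu (xi a) in
  (forall (n m : nat) (l : R),
      tfused xi eta k1 k2 k3 x (2 + n) (3 + m) l = 0) /\
  (forall l : R,
      k2 * k3 * dfun xi l * tpol xi eta k1 k2 k3 x 3 l
      = k1 * tfused xi eta k1 k2 k3 x 2 2 (l + eta)) /\
  (forall l : R,
      k2 * k3 * dfun xi l * tpol xi eta k1 k2 k3 x 3 l
      = k1 * (tpol xi eta k1 k2 k3 x 2 l * tpol xi eta k1 k2 k3 x 2 (l + eta)
              - tpol xi eta k1 k2 k3 x 3 l * tpol xi eta k1 k2 k3 x 1 (l + eta))).
Proof.
move=> N0 eta0 xiH k10 k20 k30 [e1 e2] li mi ml mx x.
exact: (main_sec N0 eta0 xiH k10 k20 k30 e1 e2 li mi ml mx).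
Qed.
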